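(* The stabilizer of $z^*$ in $G$ is the cyclic subgroup generated by $\exp(\mathrm{ad}\,z^* )$.
   Context: $\mathbb F$ is a field of characteristic zero, $\mathfrak{sl}_2$ the Lie algebra of $2\times2$ trace-zero matrices over $\mathbb F$. Let $x^*=\begin{pmatrix}1&-1\\1&-1\end{pmatrix}$, $y^*=\begin{pmatrix}0&0\\1&0\end{pmatrix}$, $z^*=\begin{pmatrix}0&-1\\0&0\end{pmatrix}$; $G$ is the subgroup of $\mathrm{Aut}_{\mathbb F}(\mathfrak{sl}_2)$ generated by $\exp(\mathrm{ad}\,x^* ),\exp(\mathrm{ad}\,y^* ),\exp(\mathrm{ad}\,z^* )$. *)

(* Defs.v *)
From HB Require Import structures.
From mathcomp Require Import all_boot all_order all_algebra.
Set Implicit Arguments. Unset Strict Implicit. Unset Printing Implicit Defensive.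
Import Order.TTheory GRing.Theory Num.Theory.
Local Open Scope ring_scope.

Section SL2.
Variable F : fieldType.

Definition sl2 : pred 'M[F]_2 := fun A => \tr A == 0.

Definition xstar : 'M[F]_2 := \matrix_(i < 2, j < 2)
  (if i == 0 then (if j == 0 then 1 else -1) else (if j == 0 then 1 else -1)).
Definition ystar : 'M[F]_2 := \matrix_(i < 2, j < 2)
  (if (i == 1) && (j == 0) then 1 else 0).
Definition zstar : 'M[F]_2 := \matrix_(i < 2, j < 2)
  (if (i == 0) && (j == 1) then -1 else 0).

(* Linear endomorphisms of 'M[F]_2 are represented by 4x4 matrices acting on
   mxvec (row-vector convention: mxvec A *m lin_mx f = mxvec (f A)). *)
Definition ad (x : 'M[F]_2) : 'M[F]_4 := lin_mx (fun A : 'M[F]_2 => x *m A - A *m x).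

(* exponential of a nilpotent endomorphism of the 4-dimensional space 'M_2:
   the exponential series truncated at the nilpotency bound N^4 = 0 *)
Definition expnil (N : 'M[F]_4) : 'M[F]_4 :=
  \sum_(k < 4) (k`!%:R)^-1 *: N ^+ k.

Definition expad (x : 'M[F]_2) : 'M[F]_4 := expnil (ad x).

Inductive gen_by (S : seq 'M[F]_4) : 'M[F]_4 -> Prop :=
| gen_by1 : gen_by S 1
| gen_byM s g : s \in S -> gen_by S g -> gen_by S (s * g)
| gen_byV s g : s \in S -> gen_by S g -> gen_by S (s^-1 * g).

Definition inG (g : 'M[F]_4) : Prop :=
  gen_by [:: expad xstar; expad ystar; expad zstar] g.

Definition fixes (g : 'M[F]_4) (A : 'M[F]_2) : Prop := mxvec A *m g = mxvec A.

End SL2.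

(* Main.v *)
Require Import Defs.
From HB Require Import structures.
From mathcomp Require Import all_boot all_order all_algebra.
Import Order.TTheory GRing.Theory Num.Theory.
Local Open Scope ring_scope.
Set Warnings "-notation-overridden -ambiguous-paths -redundant-canonical-projection".

Section L.
Variable F : fieldType.
Variable f : 'M[F]_2 -> 'M[F]_2.
Hypothesis Hf : forall a A B, f (a *: A + B) = a *: f A + f B.
Let fA := f.
HB.instance Definition _ := GRing.isSemilinear.Build F _ _ _ fA (GRing.semilinear_linear Hf).
Lemma mul_vec_linP A : mxvec A *m lin_mx f = mxvec (f A).
Proof. exact: (@mul_vec_lin F 2 2 2 2 fA). Qed.
End L.

Section Main.
Variable F : fieldType.
Implicit Types (g h : 'M[F]_4) (A M N x : 'M[F]_2).

Lemma mx4_ext g h : (forall A, mxvec A *m g = mxvec A *m h) -> g = h.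
Proof.
move=> H; apply/row_matrixP => i; rewrite !rowE.
by have := H (@vec_mx F 2 2 (delta_mx 0 i)); rewrite vec_mxK.
Qed.

Definition acts g M N := forall A, mxvec A *m g = mxvec (M *m A *m N).

Lemma acts_mul g h M N M' N' : acts g M N -> acts h M' N' ->
  acts (g * h) (M' *m M) (N *m N').
Proof. by move=> Hg Hh A; rewrite -mulmxE (mulmxA (mxvec A) g h) Hg Hh !mulmxA. Qed.

Lemma acts1 : acts 1 1 1.
Proof. by move=> A; rewrite mulmx1 mul1mx mulmx1. Qed.

Lemma acts_inv g M N : acts g M N -> M *m N = 1 -> N *m M = 1 ->
  g \is a GRing.unit /\ acts g^-1 N M.
Proof.
move=> Hg MN NM.
have Hl : forall a A B, (fun A => N *m A *m M) (a *: A + B) = a *: (fun A => N *m A *m M) A + (fun A => N *m A *m M) B.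
  by move=> a A B /=; rewrite mulmxDr mulmxDl -scalemxAr -scalemxAl.
set h := lin_mx (fun A => N *m A *m M).
have Hh : acts h N M by move=> A; rewrite mul_vec_linP.
have hg : h * g = 1.
  apply: mx4_ext => A; rewrite -mulmxE (mulmxA (mxvec A) h g) Hh Hg mulmx1.
  by rewrite !mulmxA MN mul1mx -mulmxA MN mulmx1.
have gh : g * h = 1.
  apply: mx4_ext => A; rewrite -mulmxE (mulmxA (mxvec A) g h) Hg Hh mulmx1.
  by rewrite !mulmxA NM mul1mx -mulmxA NM mulmx1.
have ug : g \is a GRing.unit.
  apply/unitrP; exists h; split => //.
split=> //.
suff -> : g^-1 = h by [].
by rewrite -[g^-1]mulr1 -gh mulrA mulVr // mul1r.
Qed.

Lemma mxvecD A B : mxvec A + mxvec B = mxvec (A + B).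
Proof. by rewrite raddfD. Qed.
Lemma mxvecN A : - mxvec A = mxvec (- A).
Proof. by rewrite raddfN. Qed.

Definition adf x A := x *m A - A *m x.

Lemma adf_lin x : forall a A B, adf x (a *: A + B) = a *: adf x A + adf x B.
Proof.
move=> a A B; rewrite /adf mulmxDr mulmxDl -scalemxAr -scalemxAl.
by rewrite scalerBr addrACA opprD.
Qed.

Lemma ad_pow x k A : mxvec A *m (ad x)^+k = mxvec (iter k (adf x) A).
Proof.
elim: k A => [|k IH] A; first by rewrite expr0 mulmx1.
rewrite exprS -mulmxE (mulmxA (mxvec A)) mul_vec_linP; last exact: adf_lin.
by rewrite IH iterSr.
Qed.

Lemma expad_sq0 x : [pchar F] =i pred0 -> x *m x = 0 -> acts (expad x) (1 + x) (1 - x).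
Proof.
move=> ch xx A; rewrite /expad /expnil mulmx_sumr !big_ord_recl big_ord0 /=.
rewrite -!scalemxAr !ad_pow /= /adf.
have e2 : x *m (x *m A - A *m x) - (x *m A - A *m x) *m x = - (x *m A *m x *+ 2).
  rewrite mulmxBr mulmxBl !mulmxA xx mul0mx -(mulmxA A) xx mulmx0.
  by rewrite sub0r subr0 -opprD -mulr2n.
have e3 : x *m (- (x *m A *m x *+ 2)) - (- (x *m A *m x *+ 2)) *m x = 0.
  rewrite !mulmxE in xx *; rewrite mulrN mulNr mulrnAr mulrnAl !mulrA xx !mul0r -!mulrA xx !mulr0.
  by rewrite mul0rn subrr.

rewrite e2 e3.
have f0 : (0`!)%:R = 1 :> F by [].
have f1 : ((bump 0 0)`!)%:R = 1 :> F by [].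
have f2 : ((bump 0 (bump 0 0))`!)%:R = 2%:R :> F by [].
have n2 : (2%:R : F) != 0 by rewrite ((pcharf0P F).1 ch 2).
rewrite f0 ?f1 f2 invr1 !scale1r linear0 scaler0 addr0.
rewrite raddfMNn -scaler_nat scalerN scalerA mulVf // scale1r.
rewrite addr0 mxvecN !mxvecD; apply: f_equal.
rewrite mulmxDl mulmxBr !mul1mx mulmx1.
by rewrite mulmxDl opprD !addrA.
Qed.

Definition isInt (a : F) := exists z : int, a = z%:~R.
Definition intmx M := forall i j, isInt (M i j).

Lemma isInt0 : isInt 0. Proof. by exists 0. Qed.
Lemma isInt1 : isInt 1. Proof. by exists 1. Qed.
Lemma isIntN1 : isInt (-1). Proof. by exists (-1). Qed.
Lemma isIntD a b : isInt a -> isInt b -> isInt (a + b).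
Proof. by move=> [z ->] [w ->]; exists (z + w); rewrite intrD. Qed.
Lemma isIntN a : isInt a -> isInt (- a).
Proof. by move=> [z ->]; exists (- z); rewrite intrN. Qed.
Lemma isIntM a b : isInt a -> isInt b -> isInt (a * b).
Proof. by move=> [z ->] [w ->]; exists (z * w); rewrite intrM. Qed.

Lemma intmxM M N : intmx M -> intmx N -> intmx (M *m N).
Proof.
move=> HM HN i j; rewrite mxE; apply: (big_ind isInt) => //.
- exact: isInt0.
- exact: isIntD.
- by move=> k _; apply: isIntM.
Qed.
Lemma intmxD M N : intmx M -> intmx N -> intmx (M + N).
Proof. by move=> HM HN i j; rewrite mxE; apply: isIntD. Qed.
Lemma intmxN M : intmx M -> intmx (- M).
Proof. by move=> HM i j; rewrite mxE; apply: isIntN. Qed.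
Lemma intmx1 : intmx 1.
Proof. move=> i j; rewrite mxE; case: (i == j); [exact: isInt1 | exact: isInt0]. Qed.

Lemma intmx_x : intmx (xstar F).
Proof. move=> i j; rewrite mxE; repeat case: ifP => _; first [apply: isInt1 | apply: isIntN1 | apply: isInt0]. Qed.
Lemma intmx_y : intmx (ystar F).
Proof. move=> i j; rewrite mxE; repeat case: ifP => _; first [apply: isInt1 | apply: isIntN1 | apply: isInt0]. Qed.
Lemma intmx_z : intmx (zstar F).
Proof. move=> i j; rewrite mxE; repeat case: ifP => _; first [apply: isInt1 | apply: isIntN1 | apply: isInt0]. Qed.

Lemma mul2E M N i j : (M *m N) i j = M i 0 * N 0 j + M i 1 * N 1 j.
Proof.
have -> : (1 : 'I_2) = lift 0 0 by apply: val_inj.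
by rewrite mxE big_ord_recl big_ord1.
Qed.

Lemma ord2P (i : 'I_2) : i = 0 \/ i = 1.
Proof. by case: i => [[|[|//]] Hi]; [left|right]; apply: val_inj. Qed.

Lemma sq0_x : xstar F *m xstar F = 0.
Proof.
apply/matrixP => i j; rewrite mul2E !mxE /=.
by case: (ord2P i) => ->; case: (ord2P j) => -> /=; rewrite ?mulr1 ?mulrN1 ?opprK ?subrr ?addNr.
Qed.
Lemma sq0_y : ystar F *m ystar F = 0.
Proof.
apply/matrixP => i j; rewrite mul2E !mxE /=.
by case: (ord2P i) => ->; case: (ord2P j) => -> /=; rewrite ?mulr0 ?mul0r ?addr0.
Qed.
Lemma sq0_z : zstar F *m zstar F = 0.
Proof.
apply/matrixP => i j; rewrite mul2E !mxE /=.
by case: (ord2P i) => ->; case: (ord2P j) => -> /=; rewrite ?mulr0 ?mul0r ?addr0.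
Qed.

Lemma sq0_inv (t : 'M[F]_2) : t *m t = 0 -> (1 + t) *m (1 - t) = 1 /\ (1 - t) *m (1 + t) = 1.
Proof.
move=> tt; rewrite !mulmxE in tt *; split.
  by rewrite mulrDl !mul1r mulrBr mulr1 tt subr0 subrK.
by rewrite mulrBl !mul1r mulrDr mulr1 tt addr0 addrK.
Qed.

Definition U (t : F) : 'M[F]_2 := 1 - t *: zstar F.

Lemma UM s t : U s *m U t = U (s + t).
Proof.
rewrite /U mulmxE mulrBl mul1r mulrBr mulr1 -scalerAl -scalerAr.
rewrite scalerA -mulmxE sq0_z scaler0 subr0 scalerDl opprD addrA.
by rewrite addrAC.
Qed.

Lemma U0 : U 0 = 1.
Proof. by rewrite /U scale0r subr0. Qed.

Lemma Uinv s : U s *m U (- s) = 1 /\ U (- s) *m U s = 1.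
Proof. by rewrite !UM subrr addNr U0. Qed.

Lemma Uz s : U s *m zstar F = zstar F /\ zstar F *m U s = zstar F.
Proof.
rewrite /U mulmxBl mulmxBr mul1mx mulmx1 -scalemxAl -scalemxAr sq0_z scaler0 subr0.
by [].
Qed.

Lemma acts_ez : [pchar F] =i pred0 -> acts (expad (zstar F)) (U (-1)) (U 1).
Proof.
move=> ch; have -> : U (-1) = 1 + zstar F by rewrite /U scaleN1r opprK.
have -> : U 1 = 1 - zstar F by rewrite /U scale1r.
exact: expad_sq0 ch sq0_z.
Qed.

Lemma acts_pow : [pchar F] =i pred0 -> forall k : int,
  acts (expad (zstar F) ^ k) (U (- k%:~R)) (U k%:~R).
Proof.
move=> ch; have Hn : forall n : nat, acts (expad (zstar F) ^+ n) (U (- n%:R)) (U n%:R).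
  elim=> [|n IH]; first by rewrite expr0 oppr0 U0; exact: acts1.
  rewrite exprS; have := @acts_mul _ _ _ _ _ _ (acts_ez ch) IH; rewrite !UM.
  have -> : - (n.+1%:R) = - (n%:R) + -1 :> F by rewrite mulrS addrC opprD.
  by rewrite mulrS.
case=> n.
  exact: Hn.
rewrite NegzE intrN opprK /=.
have [H1 H2] := Uinv (n.+1%:R).
have [_ Hi] := @acts_inv _ _ _ (Hn n.+1) H2 H1.
exact: Hi.
Qed.

Definition Pinv g := exists M N, [/\ intmx M, intmx N, M *m N = 1, N *m M = 1 & acts g M N].

Lemma gens_P s : [pchar F] =i pred0 ->
  s \in [:: expad (xstar F); expad (ystar F); expad (zstar F)] -> Pinv s.
Proof.
move=> ch; rewrite !inE => /or3P [] /eqP ->.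
- have [h1 h2] := sq0_inv (xstar F) sq0_x.
  exists (1 + xstar F), (1 - xstar F); split => //;
    [apply: intmxD; [exact: intmx1 | exact: intmx_x]
    |apply: intmxD; [exact: intmx1 | apply: intmxN; exact: intmx_x]
    |exact: (expad_sq0 (xstar F) ch sq0_x)].
- have [h1 h2] := sq0_inv (ystar F) sq0_y.
  exists (1 + ystar F), (1 - ystar F); split => //;
    [apply: intmxD; [exact: intmx1 | exact: intmx_y]
    |apply: intmxD; [exact: intmx1 | apply: intmxN; exact: intmx_y]
    |exact: (expad_sq0 (ystar F) ch sq0_y)].
- have [h1 h2] := sq0_inv (zstar F) sq0_z.
  exists (1 + zstar F), (1 - zstar F); split => //;
    [apply: intmxD; [exact: intmx1 | exact: intmx_z]
    |apply: intmxD; [exact: intmx1 | apply: intmxN; exact: intmx_z]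
    |exact: (expad_sq0 (zstar F) ch sq0_z)].
Qed.

Lemma inG_P g : [pchar F] =i pred0 -> inG g -> Pinv g.
Proof.
move=> ch; elim=> [|s h Hs _ [M [N [iM iN MN NM Ah]]]|s h Hs _ [M [N [iM iN MN NM Ah]]]].
- by exists 1, 1; split; rewrite ?mulmx1 //; [exact: intmx1|exact: intmx1|exact: acts1].
- have [Ms [Ns [iMs iNs MNs NMs As]]] := gens_P _ ch Hs.
  exists (M *m Ms), (Ns *m N); split.
  + exact: intmxM.
  + exact: intmxM.
  + by rewrite mulmxA -(mulmxA M) MNs mulmx1 MN.
  + by rewrite mulmxA -(mulmxA Ns) NM mulmx1 NMs.
  + exact: acts_mul.
- have [Ms [Ns [iMs iNs MNs NMs As]]] := gens_P _ ch Hs.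
  have [_ Ai] := @acts_inv _ _ _ As MNs NMs.
  exists (M *m Ns), (Ms *m N); split.
  + exact: intmxM.
  + exact: intmxM.
  + by rewrite mulmxA -(mulmxA M) NMs mulmx1 MN.
  + by rewrite mulmxA -(mulmxA Ms) NM mulmx1 MNs.
  + exact: acts_mul.
Qed.

Lemma fix_P g : Pinv g -> fixes g (zstar F) -> exists t : int, acts g (U t%:~R) (U (- t%:~R)).
Proof.
move=> [M [N [iM iN MN NM Ag]]] fx.
have e1 : M *m zstar F *m N = zstar F.
  by apply: (can_inj mxvecK); rewrite -Ag; exact: fx.
have e2 : M *m zstar F = zstar F *m M.
  by rewrite -[X in _ = X *m M]e1 -!mulmxA NM mulmx1.
have h11 := congr1 (fun A => A 1 1) e2.
have h01 := congr1 (fun A => A 0 1) e2.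
have h00 := congr1 (fun A => A 0 0) NM.
rewrite /= !mul2E !mxE /= in h11 h01 h00.
rewrite !mulr0 !mul0r !addr0 ?add0r !mulrN1 in h11.
rewrite !mulr0 !mul0r !addr0 ?add0r !mulrN1 !mulN1r in h01.
have m10 : M 1 0 = 0 by rewrite -[M 1 0]opprK h11 oppr0.
have m11 : M 1 1 = M 0 0 by apply: oppr_inj; rewrite h01.
rewrite m10 mulr0 addr0 in h00.
have [zn Hn] := iN 0 0.
have [zb Hb] := iM 0 1.
set a := M 0 0 in m11 h00 h01 *.
set n := N 0 0 in h00 Hn *.
set b := M 0 1 in Hb *.
have EM : M = a *: U (b * n).
  apply/matrixP => i j; rewrite !mxE.
  case: (ord2P i) => ->; case: (ord2P j) => -> /=;
    rewrite ?mulr0 ?subr0 ?mulr1 ?m10 ?m11 ?mulr0 //.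
  by rewrite mulrN1 opprK add0r mulrCA [a * n]mulrC h00 mulr1.
have EN : N = n *: U (- (b * n)).
  have H : M *m (n *: U (- (b * n))) = 1.
    rewrite EM -scalemxAl -scalemxAr scalerA mulrC h00 scale1r.
    by have [-> _] := Uinv (b * n).
  by have := congr1 (mulmx N) H; rewrite mulmxA NM mul1mx mulmx1.
exists (zb * zn); rewrite intrM -Hb -Hn => A.
rewrite Ag EM EN -!scalemxAl -scalemxAr scalerA mulrC h00 scale1r.
by [].
Qed.
End Main.

Theorem theorem6p6 (F : fieldType) (charF0 : [pchar F] =i pred0) (g : 'M[F]_4) :
  (inG g /\ fixes g (zstar F)) <-> exists k : int, g = expad (zstar F) ^ k.
Proof.
split.
- move=> [Hg fx]; have [t At] := @fix_P F g (@inG_P F g charF0 Hg) fx.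
  exists (- t); apply: (@mx4_ext F) => A.
  by rewrite At (@acts_pow F charF0 (- t) A) intrN opprK.
- move=> [k ->]; split.
  + have ein : expad (zstar F) \in [:: expad (xstar F); expad (ystar F); expad (zstar F)].
      by rewrite !inE eqxx !orbT.
    case: k => n; rewrite /exprz.
      elim: n => [|n IH]; first by rewrite expr0; exact: gen_by1.
      by rewrite exprS; apply: gen_byM.
    rewrite -exprVn; elim: n.+1 => [|m IH]; first by rewrite expr0; exact: gen_by1.
    by rewrite exprS; apply: gen_byV.
  + rewrite /fixes (@acts_pow F charF0 k (zstar F)).
    have [-> _] := @Uz F (- k%:~R); have [_ ->] := @Uz F (k%:~R).
    by [].
Qed.
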